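(* There is an absolute constant $C>0$ such that for every $n\ge 1$ and every unweighted congestion game $\mathcal{G}$ with $n$ players and affine latency functions, $\mathrm{PoA}_{\max}(\mathcal{G})\le C\sqrt{n}$; that is, $\mathrm{PoA}_{\max}(\mathcal{G})=O(\sqrt{n})$.
   Context: A weighted congestion game consists of a finite set $[n]=\{1,\dots,n\}$ of players, a finite set $E$ of resources, for each player $i$ a weight $w_i>0$ and a nonempty finite strategy set $\Sigma_i\subseteq 2^E$, and for each resource $e$ a latency function $\ell_e:\mathbb{R}_{\ge 0}\to\mathbb{R}_{\ge 0}$. It is unweighted if $w_i=1$ for all $i$. Affine latency functions means $\ell_e(x)=\alpha_e x+\beta_e$ with $\alpha_e,\beta_e\ge 0$. For a strategy profile $S=(s_1,\dots,s_n)$, the congestion of $e$ is $L_e(S)=\sum_{i:\,e\in s_i}w_i$ and the cost of player $i$ is $c_i(S)=\sum_{e\in s_i}\ell_e(L_e(S))$. The maximum social cost is $\mathrm{MAX}(S)=\max_{i\in[n]}c_i(S)$. A pure Nash equilibrium (PNE) is a profile $S$ with $c_i(S)\le c_i(S_{-i}\diamond t)$ for all $i$ and $t\in\Sigma_i$, where $(S_{-i}\diamond t)$ replaces $s_i$ by $t$. $\mathrm{PoA}_{\max}(\mathcal{G})=\max_{S\ \mathrm{PNE}}\mathrm{MAX}(S)/\min_{S'}\mathrm{MAX}(S')$. *)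

(* Defs.v *)
From mathcomp Require Import all_boot.
From Stdlib Require Import Reals.

Set Implicit Arguments.
Unset Strict Implicit.
Unset Printing Implicit Defensive.

Section CongestionGames.
Variables (n : nat) (E : finType).

Definition profile := 'I_n -> {set E}.

Definition congestion (w : 'I_n -> R) (S : profile) (e : E) : R :=
  \big[Rplus/0%R]_(i < n | e \in S i) w i.

Definition cost (ell : E -> R -> R) (w : 'I_n -> R) (S : profile) (i : 'I_n) : R :=
  \big[Rplus/0%R]_(e in S i) ell e (congestion w S e).

(* Maximum social cost MAX(S) = max_i c_i(S) (folded with base 0, which is
   harmless since costs are nonnegative for nonnegative latencies and n >= 1). *)
Definition MAXcost (ell : E -> R -> R) (w : 'I_n -> R) (S : profile) : R :=
  \big[Rmax/0%R]_(i < n) cost ell w S i.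

Definition deviate (S : profile) (i : 'I_n) (t : {set E}) : profile :=
  fun j => if j == i then t else S j.

Definition feasible (Sigma : 'I_n -> {set {set E}}) (S : profile) : Prop :=
  forall i, S i \in Sigma i.

Definition is_PNE (Sigma : 'I_n -> {set {set E}}) (ell : E -> R -> R)
    (w : 'I_n -> R) (S : profile) : Prop :=
  feasible Sigma S /\
  forall (i : 'I_n) (t : {set E}), t \in Sigma i ->
    (cost ell w S i <= cost ell w (deviate S i t) i)%R.

Definition affine_latency (alpha beta : E -> R) : E -> R -> R :=
  fun e x => (alpha e * x + beta e)%R.

Definition unit_weights : 'I_n -> R := fun _ => 1%R.

End CongestionGames.

(* Main.v *)
Require Import Defs.
From Stdlib Require Import Lra Psatz.
From HB Require Import structures.
From mathcomp Require Import all_boot.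
From Stdlib Require Import Reals.

Set Implicit Arguments.
Unset Strict Implicit.
Unset Printing Implicit Defensive.

Local Open Scope R_scope.

Lemma RplusA : associative Rplus. Proof. move=> *; ring. Qed.
HB.instance Definition _ := Monoid.isComLaw.Build R 0%R Rplus RplusA Rplus_comm Rplus_0_l.

Lemma sumR_le (I : Type) (r : seq I) (P : pred I) (F G : I -> R) :
  (forall i, P i -> F i <= G i) ->
  \big[Rplus/0]_(i <- r | P i) F i <= \big[Rplus/0]_(i <- r | P i) G i.
Proof. move=> H; apply: (big_ind2 (fun x y => x <= y)) => //; [lra|intros; lra]. Qed.

Lemma sumR_ge0 (I : Type) (r : seq I) (P : pred I) (F : I -> R) :
  (forall i, P i -> 0 <= F i) -> 0 <= \big[Rplus/0]_(i <- r | P i) F i.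
Proof. move=> H; apply: (big_ind (fun x => 0 <= x)) => //; [lra|intros; lra]. Qed.

Lemma sumR_mull (I : Type) (r : seq I) (P : pred I) (F : I -> R) c :
  \big[Rplus/0]_(i <- r | P i) (c * F i) = c * \big[Rplus/0]_(i <- r | P i) F i.
Proof.
apply: (big_ind2 (fun x y => x = c * y)) => //; [ring| intros; subst; ring].
Qed.

Lemma sumR_mulr (I : Type) (r : seq I) (P : pred I) (F : I -> R) c :
  \big[Rplus/0]_(i <- r | P i) (F i * c) = \big[Rplus/0]_(i <- r | P i) F i * c.
Proof.
apply: (big_ind2 (fun x y => x = y * c)) => //; [ring| intros; subst; ring].
Qed.

Lemma sumR_split (I : Type) (r : seq I) (P : pred I) (F G : I -> R) :
  \big[Rplus/0]_(i <- r | P i) (F i + G i) =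
  \big[Rplus/0]_(i <- r | P i) F i + \big[Rplus/0]_(i <- r | P i) G i.
Proof. exact: big_split. Qed.

Lemma sumR_sub (T : finType) (A : {set T}) (F : T -> R) :
  (forall i, 0 <= F i) ->
  \big[Rplus/0]_(i in A) F i <= \big[Rplus/0]_(i : T) F i.
Proof.
move=> H; rewrite big_mkcond /=; apply: sumR_le => i _.
by case: (i \in A); [apply: Rle_refl | apply: H].
Qed.

Lemma sum1_count (I : Type) (r : seq I) (P : pred I) :
  \big[Rplus/0]_(i <- r | P i) 1 = INR (count P r).
Proof.
elim: r => [|x r IH]; first by rewrite big_nil.
have -> : count P (x :: r) = (P x + count P r)%nat by [].
rewrite big_cons IH; case: (P x).
  by rewrite add1n S_INR; ring.
by rewrite add0n.
Qed.

Lemma le_bigmax (I : eqType) (r : seq I) (F : I -> R) j :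
  j \in r -> F j <= \big[Rmax/0]_(i <- r) F i.
Proof.
elim: r => [|x r IH] //; rewrite big_cons in_cons => /orP [/eqP ->|/IH h].
  apply: Rmax_l.
apply: Rle_trans h (Rmax_r _ _).
Qed.

Lemma bigmax_ge0 (I : Type) (r : seq I) (F : I -> R) :
  0 <= \big[Rmax/0]_(i <- r) F i.
Proof.
elim: r => [|x r IH]; first by rewrite big_nil; lra.
rewrite big_cons; apply: Rle_trans IH (Rmax_r _ _).
Qed.

Lemma INR_sq_ge k : INR k <= INR k * INR k.
Proof.
case: k => [|k]; first by rewrite /=; lra.
have : 1 <= INR k.+1 by apply: (le_INR 1); apply/leP.
nra.
Qed.

Section Game.
Variables (n : nat) (E : finType).
Local Notation w := (@unit_weights n).

Lemma cong_INR (S : profile n E) e :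
  congestion w S e = INR (count (fun j => e \in S j) (index_enum 'I_n)).
Proof. rewrite /congestion /unit_weights; exact: sum1_count. Qed.

Lemma cong_ge0 (S : profile n E) e : 0 <= congestion w S e.
Proof. rewrite cong_INR; apply: pos_INR. Qed.

Lemma cong_sq (S : profile n E) e : congestion w S e <= congestion w S e * congestion w S e.
Proof. rewrite cong_INR; apply: INR_sq_ge. Qed.

Lemma cong_ge1 (S : profile n E) e i : e \in S i -> 1 <= congestion w S e.
Proof.
move=> h; rewrite cong_INR; apply: (le_INR 1); apply/leP.
rewrite -has_count; apply/hasP; exists i => //; exact: mem_index_enum.
Qed.

Lemma cong_dev (S : profile n E) i t e :
  congestion w (deviate S i t) e <= congestion w S e + 1.
Proof.
rewrite /congestion /unit_weights big_mkcond [X in _ <= X + _]big_mkcond /=.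
apply: (Rle_trans _ (\big[Rplus/0]_(j < n) ((if e \in S j then 1 else 0) + (if j == i then 1 else 0)))).
  apply: sumR_le => j _; rewrite /deviate.
  by case: (j == i) => /=; case: (e \in t); case: (e \in S j); lra.
rewrite sumR_split -[X in _ + X <= _]big_mkcond big_pred1_eq; exact: Rle_refl.
Qed.

Lemma double_count (S : profile n E) (f : E -> R) :
  \big[Rplus/0]_(j < n) \big[Rplus/0]_(e in S j) f e =
  \big[Rplus/0]_(e : E) (congestion w S e * f e).
Proof.
rewrite (eq_bigr (fun j => \big[Rplus/0]_(e : E) (if e \in S j then f e else 0))); last by move=> j _; rewrite big_mkcond.
rewrite exchange_big; apply: eq_bigr => e _.
rewrite /congestion /unit_weights -sumR_mulr big_mkcond /=.
rewrite [in RHS]big_mkcond; apply: eq_bigr => j _; case: (e \in S j); ring.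
Qed.

End Game.

Lemma iter_plus_const k c : iter k (Rplus c) 0 = INR k * c.
Proof.
elim: k => [|k IH]; first by rewrite /=; ring.
by rewrite iterS IH S_INR; ring.
Qed.

Close Scope R_scope.

Theorem mainTheorem14 :
  exists C : R, (0 < C)%R /\
  forall (n : nat), (1 <= n)%N ->
  forall (E : finType) (Sigma : 'I_n -> {set {set E}}),
    (forall i, Sigma i != set0) ->
  forall (alpha beta : E -> R),
    (forall e, 0 <= alpha e)%R -> (forall e, 0 <= beta e)%R ->
  forall (S S' : profile n E),
    is_PNE Sigma (affine_latency alpha beta) (@unit_weights n) S ->
    feasible Sigma S' ->
    (MAXcost (affine_latency alpha beta) (@unit_weights n) S
       <= C * sqrt (INR n) * MAXcost (affine_latency alpha beta) (@unit_weights n) S')%R.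
Proof.
Local Open Scope R_scope.
exists 3; split; first lra.
move=> n n1 E Sigma _ alpha beta ha hb S S' [fS nash] fS'.
set ell := affine_latency alpha beta.
set w := @unit_weights n.
set OPT := MAXcost ell w S'.
set s := sqrt (INR n).
have hn : 1 <= INR n by apply: (le_INR 1); apply/leP.
have hs2 : s * s = INR n by apply: sqrt_sqrt; lra.
have hs1 : 1 <= s by rewrite /s -sqrt_1; apply: sqrt_le_1_alt.
have hOPT0 : 0 <= OPT by apply: bigmax_ge0.
have hcS' : forall j, cost ell w S' j <= OPT.
  by move=> j; apply: le_bigmax; exact: mem_index_enum.
have costE : forall T j, cost ell w T j =
   \big[Rplus/0]_(e in T j) (alpha e * congestion w T e + beta e) by [].
have hdev : forall j, cost ell w S j <=
   \big[Rplus/0]_(e in S' j) (alpha e * (congestion w S e + 1) + beta e).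
  move=> j; apply: Rle_trans (nash j (S' j) (fS' j)) _.
  have dj : deviate S j (S' j) j = S' j by rewrite /deviate eqxx.
  rewrite costE dj; apply: sumR_le => e _.
  have := cong_dev S j (S' j) e; have := ha e.
  rewrite -/w => h1 h2.
  have := Rmult_le_compat_l _ _ _ h1 h2; lra.
have hA : \big[Rplus/0]_(e : E) (congestion w S e * (alpha e * congestion w S e + beta e))
   <= \big[Rplus/0]_(e : E) (congestion w S' e * (alpha e * (congestion w S e + 1) + beta e)).
  rewrite -(double_count S (fun e => alpha e * congestion w S e + beta e)).
  rewrite -(double_count S' (fun e => alpha e * (congestion w S e + 1) + beta e)).
  by apply: sumR_le => j _; rewrite -costE; apply: hdev.
have hB : \big[Rplus/0]_(e : E) (congestion w S' e * (alpha e * (congestion w S e + 1) + beta e))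
   <= \big[Rplus/0]_(e : E) (/2 * (congestion w S e * (alpha e * congestion w S e + beta e))
         + 3/2 * (congestion w S' e * (alpha e * congestion w S' e + beta e))).
  apply: sumR_le => e _.
  have g1 := cong_ge0 S e; have g2 := cong_ge0 S' e; have g3 := cong_sq S' e.
  have a0 := ha e; have b0 := hb e; rewrite -/w in g1 g2 g3 *.
  have p1 : 0 <= alpha e * ((congestion w S e - congestion w S' e) * (congestion w S e - congestion w S' e)) by apply: Rmult_le_pos; [exact: a0 | exact: Rle_0_sqr].
  have p2 : 0 <= alpha e * (congestion w S' e * congestion w S' e - congestion w S' e) by apply: Rmult_le_pos; lra.
  have p3 : 0 <= beta e * congestion w S e by apply: Rmult_le_pos.
  have p4 : 0 <= beta e * congestion w S' e by apply: Rmult_le_pos.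
  nra.
rewrite sumR_split !sumR_mull in hB.
have hD : \big[Rplus/0]_(e : E) (congestion w S' e * (alpha e * congestion w S' e + beta e))
   <= INR n * OPT.
  rewrite -(double_count S' (fun e => alpha e * congestion w S' e + beta e)).
  apply: (Rle_trans _ (\big[Rplus/0]_(j < n) OPT)).
    by apply: sumR_le => j _; rewrite -costE; apply: hcS'.
  rewrite big_const_ord iter_plus_const; lra.
have hsq : \big[Rplus/0]_(e : E) (alpha e * (congestion w S e * congestion w S e))
   <= \big[Rplus/0]_(e : E) (congestion w S e * (alpha e * congestion w S e + beta e)).
  apply: sumR_le => e _; have := cong_ge0 S e; have := ha e; have := hb e; rewrite -/w; nra.
have hX : \big[Rplus/0]_(e : E) (alpha e * (congestion w S e * congestion w S e))
   <= 3 * INR n * OPT by lra.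
set k := / (2 * s).
have hk0 : 0 < k by rewrite /k; apply: Rinv_0_lt_compat; lra.
have hks : k * s = /2 by rewrite /k; field; lra.
rewrite /MAXcost; apply: (big_ind (fun x => x <= 3 * s * OPT)).
- nra.
- by move=> x y hx hy; apply: Rmax_lub.
move=> i _.
have h1 := hdev i.
have hsplit : \big[Rplus/0]_(e in S' i) (alpha e * (congestion w S e + 1) + beta e)
  = \big[Rplus/0]_(e in S' i) (alpha e * congestion w S e)
    + \big[Rplus/0]_(e in S' i) (alpha e + beta e).
  by rewrite -sumR_split; apply: eq_bigr => e _; ring.
have h2 : \big[Rplus/0]_(e in S' i) (alpha e + beta e) <= OPT.
  apply: Rle_trans (hcS' i); rewrite costE; apply: sumR_le => e he.
  have := cong_ge1 he; have := ha e; rewrite -/w; nra.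
have h3 : \big[Rplus/0]_(e in S' i) alpha e <= OPT.
  apply: Rle_trans (hcS' i); rewrite costE; apply: sumR_le => e he.
  have := cong_ge1 he; have := ha e; have := hb e; rewrite -/w; nra.
have h4 : \big[Rplus/0]_(e in S' i) (alpha e * congestion w S e)
  <= \big[Rplus/0]_(e in S' i) (k * (alpha e * (congestion w S e * congestion w S e))
        + s / 2 * alpha e).
  apply: sumR_le => e _.
  have e1 : 0 <= alpha e * ((congestion w S e - s) * (congestion w S e - s)).
    apply: Rmult_le_pos; [apply: ha | exact: Rle_0_sqr].
  have e2 : 0 <= k * (alpha e * ((congestion w S e - s) * (congestion w S e - s))).
    apply: Rmult_le_pos; lra.
  have e3 : k * (alpha e * ((congestion w S e - s) * (congestion w S e - s))) =
     k * (alpha e * (congestion w S e * congestion w S e))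
     - 2 * (k * s) * (alpha e * congestion w S e) + (k * s) * s * alpha e by ring.
  rewrite hks in e3; lra.
rewrite sumR_split !sumR_mull in h4.
have h5 : \big[Rplus/0]_(e in S' i) (alpha e * (congestion w S e * congestion w S e))
   <= \big[Rplus/0]_(e : E) (alpha e * (congestion w S e * congestion w S e)).
  apply: sumR_sub => e; have := cong_ge0 S e; have := ha e; rewrite -/w; nra.
have h6 : k * \big[Rplus/0]_(e in S' i) (alpha e * (congestion w S e * congestion w S e))
   <= k * (3 * INR n * OPT).
  apply: Rmult_le_compat_l; lra.
have h7 : k * (3 * INR n * OPT) = 3 / 2 * s * OPT.
  rewrite -hs2; have -> : k * (3 * (s * s) * OPT) = 3 * (k * s) * s * OPT by ring.
  rewrite hks; field.
have h8 : s / 2 * \big[Rplus/0]_(e in S' i) alpha e <= s / 2 * OPT.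
  apply: Rmult_le_compat_l; lra.
have h9 : OPT <= s * OPT by nra.
lra.
Qed.
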